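(* Let $p$ be an odd prime, let $W_p=U\rtimes C_p$ be the wreath product $C_2\wr C_p$, let $T$ be its center, and let $G=W_p/T=V\rtimes C$ where $V=U/T$ and $C$ is the image of $C_p$. Then the automorphism group $\mathrm{Aut}(G)$ acts transitively on $G\setminus V$.
   Context: Here $U=\mathbb{F}_2^{\,p}$ and a generator of the cyclic group $C_p$ of order $p$ acts on $U$ by cyclically permuting coordinates, and $W_p=U\rtimes C_p$. The center of $W_p$ is $T=\{(0,\dots,0),(1,\dots,1)\}\subseteq U$, so $V=U/T$ is an $\mathbb{F}_2$-vector space of dimension $p-1$ which is a normal subgroup of $G$, and $G=V\rtimes C$ with $C$ cyclic of order $p$. *)

(* Defs.v *)
From mathcomp Require Import all_boot all_order all_fingroup all_solvable.
Set Implicit Arguments. Unset Strict Implicit. Unset Printing Implicit Defensive.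

(* The wreath product W_p = C_2 wr C_p = U >| C_p, realized as its natural
   (faithful) permutation action on 'I_p * bool: the base group U = F_2^p
   acts by flipping the bool in the fibres, C_p by cycling the coordinates. *)

Definition flip_fun p (i : 'I_p) (x : 'I_p * bool) : 'I_p * bool :=
  if x.1 == i then (x.1, ~~ x.2) else x.

Lemma flip_fun_inj p (i : 'I_p) : injective (flip_fun i).
Proof.
have K : cancel (flip_fun i) (flip_fun i).
  case=> a b; rewrite /flip_fun /=; case: (a =P i) => [->|/eqP/negbTE E] /=.
    by rewrite eqxx negbK.
  by rewrite E.
exact: can_inj K.
Qed.

Definition flip p (i : 'I_p) : {perm 'I_p * bool} := perm (@flip_fun_inj p i).

Definition rot_fun p (x : 'I_p * bool) : 'I_p * bool := (ordS x.1, x.2).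

Lemma rot_fun_inj p : injective (@rot_fun p).
Proof. move=> [a b] [c d] H; have E1 : ordS a = ordS c := f_equal fst H. have E2 : b = d := f_equal snd H. by rewrite (ordS_inj E1) E2. Qed.

Definition rot p : {perm 'I_p * bool} := perm (@rot_fun_inj p).

Definition Ugrp p : {group {perm 'I_p * bool}} := <<[set flip i | i : 'I_p]>>%G.
Definition Cgrp p : {group {perm 'I_p * bool}} := <[rot p]>%G.
Definition Wgrp p : {group {perm 'I_p * bool}} := (Ugrp p <*> Cgrp p)%G.
Definition Tgrp p : {group {perm 'I_p * bool}} := 'Z(Wgrp p)%G.

(* Main.v *)
Require Import Defs.
From mathcomp Require Import all_boot all_order all_fingroup all_solvable.
Set Implicit Arguments. Unset Strict Implicit. Unset Printing Implicit Defensive.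
Local Open Scope group_scope.

Section Wreath.
Variable p : nat.
Hypothesis p_prime : prime p.
Hypothesis p_odd : odd p.

Let p_gt0 : 0 < p. Proof. exact: prime_gt0. Qed.
Let p_gt2 : 2 < p.
Proof.
have := prime_gt1 p_prime; rewrite leq_eqVlt => /orP[/eqP E|//].
by move: p_odd; rewrite -E.
Qed.

Definition fl_fun (f : 'I_p -> bool) (a : 'I_p * bool) := (a.1, a.2 (+) f a.1).
Lemma fl_fun_inj f : injective (fl_fun f).
Proof.
apply: (can_inj (g := fl_fun f)) => -[i b]; rewrite /fl_fun /=.
by rewrite -addbA addbb addbF.
Qed.
Definition fl f : {perm 'I_p * bool} := perm (@fl_fun_inj f).
Lemma flE f a : fl f a = (a.1, a.2 (+) f a.1).
Proof. by rewrite permE. Qed.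
Lemma fl_ext f g : f =1 g -> fl f = fl g.
Proof. by move=> E; apply/permP => a; rewrite !flE E. Qed.
Lemma flM f g : fl f * fl g = fl (fun i => f i (+) g i).
Proof. by apply/permP => a; rewrite permM !flE /= addbA. Qed.
Lemma fl0 : fl (fun _ => false) = 1.
Proof. by apply/permP => a; rewrite perm1 flE addbF; case: a. Qed.
Lemma flK f : fl f * fl f = 1.
Proof. by rewrite flM -fl0; apply: fl_ext => i; rewrite addbb. Qed.
Lemma flV f : (fl f)^-1 = fl f.
Proof. by apply/eqP; rewrite eq_invg_mul flK. Qed.
Lemma flip_fl i : flip i = fl (fun j => j == i).
Proof.
apply/permP => -[j b]; rewrite flE permE /flip_fun /=.
by case: (j == i); rewrite ?addbT ?addbF.
Qed.

Definition Uset := [set u : {perm 'I_p * bool} | [exists f : {ffun 'I_p -> bool}, u == fl f]].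

Lemma Uset_group : group_set Uset.
Proof.
apply/group_setP; split.
  by rewrite inE; apply/existsP; exists [ffun=> false]; rewrite -fl0; apply/eqP/fl_ext => i; rewrite ffunE.
move=> x y; rewrite !inE => /existsP[f /eqP->] /existsP[g /eqP->].
apply/existsP; exists [ffun i => f i (+) g i]; rewrite flM; apply/eqP/fl_ext => i.
by rewrite ffunE.
Qed.

Lemma U_fl u : u \in Ugrp p -> exists f, u = fl f.
Proof.
move=> Hu.
have : u \in Group Uset_group.
  move: u Hu; apply/subsetP; rewrite gen_subG; apply/subsetP => x /imsetP[i _ ->].
  rewrite inE; apply/existsP; exists [ffun j => j == i]; rewrite flip_fl.
  by apply/eqP/fl_ext => j; rewrite ffunE.
by rewrite inE => /existsP[f /eqP->]; exists f.
Qed.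

Lemma fl_prod f (s : seq 'I_p) : uniq s ->
  \prod_(i <- s) fl (fun j => (j == i) && f i) = fl (fun j => (j \in s) && f j).
Proof.
elim: s => [|i s IH] /=.
  by move=> _; rewrite big_nil -fl0; apply: fl_ext.
case/andP => ns us; rewrite big_cons IH // flM; apply: fl_ext => j.
rewrite in_cons; case: (eqVneq j i) => [->|_] /=; last by [].
by rewrite (negbTE ns) addbF.
Qed.

Lemma fl_U f : fl f \in Ugrp p.
Proof.
have -> : fl f = \prod_(i <- enum 'I_p) fl (fun j => (j == i) && f i).
  by rewrite fl_prod ?enum_uniq //; apply: fl_ext => j; rewrite mem_enum.
apply: group_prod => i _; case: (f i).
  rewrite (@fl_ext _ (fun j => j == i)); last by move=> j; rewrite andbT.
  by rewrite -flip_fl; apply: mem_gen; apply: imset_f.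
by rewrite (@fl_ext _ (fun _ => false)) ?fl0 ?group1 // => j; rewrite andbF.
Qed.

Lemma U_flP u : reflect (exists f, u = fl f) (u \in Ugrp p).
Proof. by apply: (iffP idP) => [/U_fl//|[f ->]]; apply: fl_U. Qed.


Lemma rotX k a : (Defs.rot p ^+ k) a = (Ordinal (ltn_pmod (a.1 + k) p_gt0), a.2).
Proof.
elim: k => [|k IH].
  rewrite expg0 perm1; case: a => i b /=; congr (_, _); apply: val_inj => /=.
  by rewrite addn0 modn_small.
rewrite expgSr permM IH permE /rot_fun /=; congr (_, _); apply: val_inj => /=.
by rewrite -addn1 modnDml addn1 addnS.
Qed.

Lemma rot_p : Defs.rot p ^+ p = 1.
Proof.
apply/permP => a; rewrite rotX perm1; case: a => i b /=; congr (_, _).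
by apply: val_inj => /=; rewrite modnDr modn_small.
Qed.

Lemma conj_app (x y : {perm 'I_p * bool}) a : (y ^ x) (x a) = x (y a).
Proof. by rewrite conjgE !permM permK. Qed.

Lemma perm_eq_on (x y z : {perm 'I_p * bool}) : (forall a, y (x a) = z (x a)) -> y = z.
Proof. by move=> H; apply/permP => b; rewrite -(permKV x b) H. Qed.

Definition lift_fun (s : 'I_p -> 'I_p) (a : 'I_p * bool) := (s a.1, a.2).
Lemma lift_inj s : injective s -> injective (lift_fun s).
Proof.
move=> sI [i b] [j c] [] /sI -> -> //.
Qed.
Definition liftp s (sI : injective s) : {perm 'I_p * bool} := perm (lift_inj sI).

Lemma conj_fl_lift s (sI : injective s) f :
  fl f ^ liftp sI = fl (fun i => f (invF sI i)).
Proof.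
apply: (@perm_eq_on (liftp sI)) => a; rewrite conj_app !flE !permE /lift_fun /=.
by rewrite invF_f.
Qed.

Definition mulk k (i : 'I_p) : 'I_p := Ordinal (ltn_pmod (k * i) p_gt0).

Lemma mulk_inj k : coprime p k -> injective (mulk k).
Proof.
move=> cop.
suff H : forall i j : 'I_p, i <= j -> mulk k i = mulk k j -> i = j.
  by move=> i j E; case: (leqP i j) => [le|/ltnW le]; [apply: H|symmetry; apply: H].
move=> i j le /(congr1 val) /= /eqP; rewrite eq_sym eqn_mod_dvd ?leq_mul2l ?le ?orbT //.
rewrite -mulnBr Gauss_dvdr // => dv; apply: val_inj => /=; apply/eqP.
rewrite eqn_leq le /= leqNgt; apply/negP => lt.
move: dv; rewrite /dvdn modn_small; first by rewrite subn_eq0 leqNgt lt.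
by apply: leq_ltn_trans (leq_subr _ _) _.
Qed.

Local Notation U := (Ugrp p).
Local Notation C := (Cgrp p).
Local Notation W := (Wgrp p).
Local Notation T := (Tgrp p).
Local Notation r := (Defs.rot p).

Lemma normU_fl x : (forall f, fl f ^ x \in U) -> x \in 'N(U).
Proof.
move=> H; rewrite inE; apply/subsetP => y; rewrite mem_conjg => /U_fl[f E].
by rewrite -(conjgKV x y) E H.
Qed.

Lemma rot_lift : r = liftp (@ordS_inj p).
Proof. by apply/permP => a; rewrite !permE. Qed.

Lemma rot_NU : r \in 'N(U).
Proof. by apply: normU_fl => f; rewrite rot_lift conj_fl_lift fl_U. Qed.

Lemma C_NU : C \subset 'N(U).
Proof. by rewrite cycle_subG rot_NU. Qed.

Lemma W_NU : W \subset 'N(U).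
Proof. by rewrite join_subG normG C_NU. Qed.

Lemma W_UC : W :=: U * C.
Proof. by rewrite /Wgrp /= norm_joinEr // C_NU. Qed.

Lemma U_W : U \subset W.
Proof. exact: joing_subl. Qed.

Lemma rot_W : r \in W.
Proof. by apply: (subsetP (joing_subr _ _)); apply: cycle_id. Qed.

Lemma T_W : T \subset W.
Proof. exact: center_sub. Qed.

Lemma W_NT : W \subset 'N(T).
Proof. exact: normal_norm (center_normal _). Qed.

Lemma T_cent t x : t \in T -> x \in W -> commute t x.
Proof.
move=> tT xW; move: tT; rewrite /Tgrp /= inE => /andP[_ /centP]; apply; exact: xW.
Qed.

Lemma flc_T c : fl (fun _ => c) \in T.
Proof.
rewrite /Tgrp /= inE; apply/andP; split; first by apply: (subsetP U_W); apply: fl_U.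
rewrite /Wgrp /= centY inE; apply/andP; split; last first.
  rewrite cent_cycle; apply/cent1P; apply/permP => a.
  by rewrite !permM !flE !permE /Defs.rot_fun.
rewrite cent_gen; apply/centP => y /imsetP[i _ ->]; rewrite flip_fl /commute !flM.
by apply: fl_ext => j; rewrite addbC.
Qed.

Fixpoint gg (F : nat -> bool) (c : bool) (m : nat) : bool :=
  if m is m'.+1 then gg F c m' (+) F m' (+) c else false.

Lemma gg_odd F c m : gg F c m = gg F false m (+) (odd m && c).
Proof.
elim: m => [|m IH] //=; rewrite IH addbF; clear IH.
by case: (odd m); case: c; case: (gg F false m); case: (F m).
Qed.

Lemma key_conj h : exists g c, fl h * r = r ^ fl g * fl (fun _ => c).
Proof.
pose F m := h (Ordinal (ltn_pmod m p_gt0)).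
have FE (i : 'I_p) : F i = h i by rewrite /F; congr h; apply: val_inj; rewrite /= modn_small.
pose c := gg F false p.
pose g (i : 'I_p) := gg F c i.
exists g, c; apply/permP => -[i b].
rewrite conjgE flV !permM !flE !permE /Defs.rot_fun /=.
congr (_, _).
have [lt|] := ltnP i.+1 p.
  have -> : g (ordS i) = gg F c i.+1 by rewrite /g /= modn_small.
  rewrite /= -FE /g; clear g; clearbody c.
  move: (gg F c i) (F i) => x y; clear FE.
  by move: (b : bool) x y c => [] [] [] [].
move=> le; have ip : i.+1 = p by apply/eqP; rewrite eqn_leq le ltn_ord.
have -> : g (ordS i) = false by rewrite /g /= ip modnn.
have hp1 : p.-1 = i by move: ip => /(congr1 predn).
have hi : h i = F p.-1 by rewrite -FE hp1.
have gi : g i = gg F false p.-1.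
  rewrite /g gg_odd; have -> : odd i = false.
    by move: p_odd; rewrite -hp1; case: (p) => //= n /negbTE.
  by rewrite hp1 andFb addbF.
have cE : c = gg F false p.-1 (+) F p.-1.
  by rewrite /c; case: (p) p_gt0 => //= n _; rewrite addbF.
rewrite hi gi cE; clear.
by move: (gg F false p.-1) (F p.-1) (b : bool) => [] [] [].
Qed.

Section Pi.
Variable k : nat.
Hypothesis cop : coprime p k.
Let pi := liftp (mulk_inj cop).

Lemma rot_pi : r ^ pi = r ^+ k.
Proof.
apply: (@perm_eq_on pi) => a; rewrite conj_app rotX !permE /lift_fun /Defs.rot_fun /=.
congr (_, _); apply: val_inj => /=.
by rewrite modnMmr modnDml -addn1 mulnDr muln1.
Qed.

Lemma pi_NU : pi \in 'N(U).
Proof. by apply: normU_fl => f; rewrite conj_fl_lift fl_U. Qed.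

Lemma pi_NC : pi \in 'N(C).
Proof.
by rewrite inE /Cgrp /= -cycleJ rot_pi cycle_subG mem_cycle.
Qed.

Lemma pi_NW : pi \in 'N(W).
Proof.
by rewrite -sub1set /Wgrp /= normsY // sub1set ?pi_NU ?pi_NC.
Qed.

Lemma pi_NT : pi \in 'N(T).
Proof.
by rewrite -sub1set; apply: char_norm_trans (center_char _) _; rewrite sub1set pi_NW.
Qed.

Lemma fl_pi f : fl f = fl (fun i => f (mulk k i)) ^ pi.
Proof. by rewrite conj_fl_lift; apply: fl_ext => i; rewrite f_invF. Qed.

End Pi.

Lemma XpV x : x \in W / T -> x ^+ p \in U / T.
Proof.
case/morphimP => w Nw Ww ->; rewrite -morphX //; apply: mem_quotient.
have NUw : w \in 'N(U) := subsetP W_NU w Ww.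
apply: coset_idr; first exact: groupX.
rewrite morphX //; apply/eqP; rewrite -order_dvdn.
have H : #|W / U| %| p.
  have -> : W / U = C / U by rewrite /Wgrp /= quotientYidl ?C_NU.
  apply: dvdn_trans (dvdn_quotient _ _) _.
  by rewrite order_dvdn rot_p.
exact: dvdn_trans (order_dvdG (mem_quotient U Ww)) H.
Qed.

Lemma X2V x : x \in W / T -> x ^+ 2 \in U / T -> x \in U / T.
Proof.
move=> Gx V2; have := XpV Gx.
have gen n : odd n -> x ^+ n = x * (x ^+ 2) ^+ n./2.
  by move=> on; rewrite -{1}(odd_double_half n) on expgD expg1 -muln2 mulnC expgM.
rewrite (gen p p_odd).
by rewrite groupMr // groupX.
Qed.

Lemma V2 y : y \in U / T -> y ^+ 2 = 1.
Proof.
case/morphimP => u Nu Uu ->; rewrite -morphX //; case/U_fl: Uu => f ->.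
by rewrite expgS expg1 flK morph1.
Qed.

Lemma autS a x : a \in Aut (W / T) -> x \in (W / T) :\: (U / T) -> a x \in (W / T) :\: (U / T).
Proof.
move=> Aa; rewrite !in_setD => /andP[nV Gx]; rewrite (Aut_closed Aa Gx) andbT.
apply: contra nV => aV; apply: X2V => //.
have E1 : a (x ^+ 2) = (a x) ^+ 2.
  by have := morphX (autm_morphism Aa) 2 Gx; rewrite /= autmE.
have E2 : a 1 = 1.
  by have := morph1 (autm_morphism Aa); rewrite /= autmE.
have : a (x ^+ 2) = a 1 by rewrite E1 E2 V2.
by move/perm_inj ->.
Qed.

Lemma x0S : coset T r \in (W / T) :\: (U / T).
Proof.
rewrite in_setD (mem_quotient _ rot_W) andbT; apply/negP => /V2.
have Nr : r \in 'N(T) := subsetP W_NT r rot_W.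
rewrite -morphX // => /(coset_idr (groupX 2 Nr)) rT2.
pose i0 : 'I_p := Ordinal p_gt0.
have fW : flip i0 \in W by apply: (subsetP U_W); apply: mem_gen; apply: imset_f.
have := T_cent rT2 fW => /(congr1 (fun s : {perm _} => (s (i0, false)).2)).
rewrite /= !permM flip_fl !flE !permE /Defs.rot_fun /= eqxx.
have -> : (ordS (ordS i0) == i0) = false.
  apply/negbTE; apply/eqP => /(congr1 val) /=.
  by rewrite (modn_small (ltnW p_gt2)) modn_small.
by [].
Qed.

Lemma conj_orbit (z h : coset_of T) : z \in W / T -> h \in 'N(W / T) ->
  z ^ h \in orbit 'P (Aut (W / T)) z.
Proof.
move=> Gz Nh; apply/orbitP; exists (conj_aut (W / T)%G h).
  by apply: (subsetP (Aut_conj_aut _ 'N(W / T))); apply: mem_morphim.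
by rewrite /= apermE norm_conj_autE.
Qed.

Lemma main : [transitive Aut (W / T), on (W / T) :\: (U / T) | 'P].
Proof.
apply/imsetP; exists (coset T r); first exact: x0S.
apply/setP => y; apply/idP/idP; last first.
  by case/orbitP => a Aa <-; rewrite /= apermE; apply: autS x0S.
case/setDP => Gy nVy.
case/morphimP: Gy nVy => w Nw Ww -> nVy.
have : w \in U * C by rewrite -W_UC.
case/mulsgP => u c Uu Cc wE; case/cycleP: Cc => k cE.
rewrite -(expg_mod _ rot_p) in cE.
have k0 : k %% p != 0.
  apply: contra nVy => /eqP k0; rewrite wE cE k0 expg0 mulg1; exact: mem_quotient.
have cop : coprime p (k %% p).
  rewrite prime_coprime //; apply/negP => /(dvdn_leq _); rewrite lt0n k0 => /(_ isT).
  by rewrite leqNgt ltn_mod p_gt0.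
case/U_fl: Uu wE => f -> wE.
have [g [b E]] := key_conj (fun i => f (mulk (k %% p) i)).
have wE' : w = (r ^ fl g * fl (fun _ => b)) ^ liftp (mulk_inj cop).
  by rewrite wE cE -E conjMg -fl_pi rot_pi.
have Ngp := pi_NT cop.
have NgW : liftp (mulk_inj cop) \in 'N(W) := pi_NW cop.
have Ngg : fl g \in 'N(T) by apply: (subsetP W_NT); apply: (subsetP U_W); apply: fl_U.
have Nr : r \in 'N(T) := subsetP W_NT r rot_W.
have Nb : fl (fun _ => b) \in 'N(T) := subsetP W_NT _ (subsetP T_W _ (flc_T b)).
have Nrg : r ^ fl g \in 'N(T) by apply: groupJ.
rewrite wE' morphJ //; last by apply: groupM.
rewrite morphM //.
have -> : coset_morphism T (fl (fun=> b)) = 1 := coset_id (flc_T b).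
rewrite mulg1 morphJ //.
apply: orbit_trans (conj_orbit _ _) _.
- by rewrite groupJ ?mem_quotient ?rot_W ?(subsetP U_W) ?fl_U.
- by apply/normP; rewrite -quotientJ // (normP NgW).
apply: conj_orbit; first by rewrite mem_quotient ?rot_W.
by apply: (subsetP (normG _)); rewrite mem_quotient ?(subsetP U_W) ?fl_U.
Qed.

End Wreath.

Local Open Scope group_scope.
Theorem lemma2 (p : nat) (p_prime : prime p) (p_odd : odd p) :
  [transitive Aut (Wgrp p / Tgrp p),
     on (Wgrp p / Tgrp p) :\: (Ugrp p / Tgrp p) | 'P].
Proof. exact: main. Qed.
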